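(* Let $\sigma_{CF2}$ be CF2 semantics. For every two argumentation frameworks $AF=(AR,Attacks)$ and $AF'=(AR',Attacks')$ with $AF\preceq_N AF'$: $$\forall E\in\sigma_{CF2}(AF)\ \exists E'\in\sigma_{CF2}(AF') \text{ such that } (E'\not\subseteq AR\ \lor\ E'=E).$$
   Context: An argumentation framework is a pair $AF=(AR,Attacks)$ with $AR$ a finite set and $Attacks\subseteq AR\times AR$; $a$ attacks $b$ iff $(a,b)\in Attacks$; a set $S$ attacks $b$ iff some element of $S$ attacks $b$. $AF\preceq_N AF'$ (normal expansion) iff $AR\subseteq AR'$, $Attacks\subseteq Attacks'$ and no $(a,b)\in Attacks'\setminus Attacks$ has $a,b\in AR$. $S$ is conflict-free iff no element of $S$ attacks an element of $S$; a naive extension is a $\subseteq$-maximal conflict-free set. Attack sequence: $\langle a_1,\dots,a_n\rangle$ of pairwise distinct arguments with $(a_i,a_{i+1})\in Attacks$; $b$ is reachable from $a$ iff such a sequence has $a_1=a,a_n=b$. SCCs: maximal sets of mutually reachable arguments; $SCCS_{AF}$ is the set of them. $AF\downarrow_S=(S,Attacks\cap(S\times S))$. For an SCC $S$ and $E\subseteq AR$: $S^-_{out}=\{a\notin S: a\text{ attacks some element of }S\}$; $D_{AF}(S,E)=\{a\in S: E\cap S^-_{out}\text{ attacks }a\}$; $P_{AF}(S,E)=\{a\in S: E\cap S^-_{out}\text{ does not attack }a\text{ and }\exists b\in S^-_{out}\text{ attacking }a\text{ such that }E\text{ does not attack }b\}$; $UP_{AF}(S,E)=S\setminus D_{AF}(S,E)$.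 CF2: $E\subseteq AR$ is a CF2 extension of $AF$ iff either $|SCCS_{AF}|=1$ and $E$ is a naive extension of $AF$, or $|SCCS_{AF}|>1$ and for every $S\in SCCS_{AF}$, $E\cap S$ is a CF2 extension of $AF\downarrow_{UP_{AF}(S,E)}$. $\sigma_{CF2}(AF)$ is the set of all CF2 extensions. *)

(* Defs.v *)
From mathcomp Require Import all_boot.
Set Implicit Arguments. Unset Strict Implicit. Unset Printing Implicit Defensive.

(* Only the
   attacks between members of AR count (see [attacks]); thus every value
   denotes a genuine AF (AR, Attacks) with Attacks ⊆ AR × AR. *)
Record AF (T : finType) := mkAF { AR : {set T}; Att : rel T }.

Section AFDefs.
Variable T : finType.
Implicit Types (F : AF T) (E S : {set T}).

Definition attacks F : rel T :=
  fun a b => [&& a \in AR F, b \in AR F & Att F a b].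

Definition set_attacks F E (b : T) : bool := [exists a in E, attacks F a b].

Definition normal_expansion F F' : Prop :=
  [/\ AR F \subset AR F',
      (forall a b, attacks F a b -> attacks F' a b) &
      (forall a b, a \in AR F -> b \in AR F -> attacks F' a b -> attacks F a b)].

Definition conflict_free F E : bool :=
  [forall a in E, forall b in E, ~~ attacks F a b].

Definition naive F E : bool :=
  [&& E \subset AR F, conflict_free F E &
      [forall E' : {set T},
         ~~ [&& E' \subset AR F, conflict_free F E' & E \proper E']]].

(* reachability along attack sequences (reflexive: the one-element sequence) *)
Definition reach F : rel T := connect (attacks F).

Definition scc F (a : T) : {set T} :=
  [set b in AR F | reach F a b && reach F b a].
Definition SCCS F : {set {set T}} := [set scc F a | a in AR F].

Definition restrict F S : AF T := mkAF (S :&: AR F) (Att F).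

Definition S_out F S : {set T} :=
  [set a in AR F | (a \notin S) && [exists b in S, attacks F a b]].
Definition D_AF F S E : {set T} :=
  [set a in S | set_attacks F (E :&: S_out F S) a].
Definition P_AF F S E : {set T} :=
  [set a in S | ~~ set_attacks F (E :&: S_out F S) a &&
                [exists b in S_out F S, attacks F b a && ~~ set_attacks F E b]].
Definition UP_AF F S E : {set T} := S :\: D_AF F S E.

(* CF2 with fuel n; the fuel #|AR| suffices since in the recursive case each
   UP_AF(S,E) ⊆ S is a proper subset of AR (there are >1 SCCs). *)
Fixpoint cf2_fuel (n : nat) F E : bool :=
  (E \subset AR F) &&
  if #|SCCS F| <= 1 then naive F E
  else match n with
       | 0 => false
       | n'.+1 => [forall S in SCCS F,
                    cf2_fuel n' (restrict F (UP_AF F S E)) (E :&: S)]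
       end.

Definition cf2_ext F E : bool := cf2_fuel #|AR F| F E.

End AFDefs.

(* Main.v *)
From Stdlib Require Import FunctionalExtensionality.
Require Import Defs.
From mathcomp Require Import all_boot.

Set Implicit Arguments. Unset Strict Implicit. Unset Printing Implicit Defensive.

Lemma attacks_restrict (T : finType) (F : AF T) S a b :
  attacks (restrict F S) a b = [&& a \in S, b \in S & attacks F a b].
Proof.
rewrite /attacks /= !inE.
by case: (a \in S); case: (b \in S); case: (a \in AR F); case: (b \in AR F).
Qed.

Definition eqAF (T : finType) (F G : AF T) := AR F = AR G /\ attacks F =2 attacks G.

Lemma eqAF_restrict (T : finType) (F G : AF T) X :
  eqAF F G -> eqAF (restrict F X) (restrict G X).
Proof.
move=> [hA hB]; split; first by rewrite /= hA.
by move=> a b; rewrite !attacks_restrict hB.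
Qed.

Lemma cf2_fuel_eq (T : finType) n (F G : AF T) E :
  eqAF F G -> cf2_fuel n F E = cf2_fuel n G E.
Proof.
elim: n F G E => [|n IH] F G E [hA hB].
all: have hB' : attacks F = attacks G by
  apply: functional_extensionality => a; apply: functional_extensionality => b.
all: rewrite /= /naive /conflict_free /SCCS /scc /reach /UP_AF /D_AF /S_out /set_attacks hA hB' //.
case: ifP => // _; congr (_ && _); apply: eq_forallb => S; congr (_ ==> _).
apply: IH; apply: eqAF_restrict; split => //.
Qed.

Lemma cf2_ext_eq (T : finType) (F G : AF T) E :
  eqAF F G -> cf2_ext F E = cf2_ext G E.
Proof. move=> h; rewrite /cf2_ext (cf2_fuel_eq _ _ h); by case: h => ->. Qed.
Section S.
Variable T : finType.
Implicit Types (F G : AF T) (E S X U V : {set T}).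

Lemma scc_sub F x : scc F x \subset AR F.
Proof. by apply/subsetP => y; rewrite inE => /andP[]. Qed.

Lemma mem_scc F x : x \in AR F -> x \in scc F x.
Proof. by move=> h; rewrite inE h /reach connect0. Qed.

Lemma in_scc F x y : (y \in scc F x) = [&& y \in AR F, reach F x y & reach F y x].
Proof. by rewrite inE. Qed.

Lemma scc_eq F x y : y \in scc F x -> scc F y = scc F x.
Proof.
rewrite in_scc => /and3P[_ hxy hyx]; apply/setP => z; rewrite !in_scc.
case: (z \in AR F) => //=; apply/andP/andP => -[h1 h2]; split.
- exact: connect_trans hxy h1.
- exact: connect_trans h2 hyx.
- exact: connect_trans hyx h1.
- exact: connect_trans h2 hxy.
Qed.

Lemma SCCSP F S : reflect (exists2 x, x \in AR F & S = scc F x) (S \in SCCS F).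
Proof. exact: imsetP. Qed.

Lemma SCCS_disj F S1 S2 z : S1 \in SCCS F -> S2 \in SCCS F -> z \in S1 -> z \in S2 -> S1 = S2.
Proof.
move=> /SCCSP[x _ ->] /SCCSP[y _ ->] h1 h2.
by rewrite -(scc_eq h1) -(scc_eq h2).
Qed.

Lemma SCCS_sub F S : S \in SCCS F -> S \subset AR F.
Proof. by move=> /SCCSP[x _ ->]; apply: scc_sub. Qed.

Lemma card_SCCS F : #|SCCS F| <= #|AR F|.
Proof. exact: leq_imset_card. Qed.

Lemma SCCS_small F S : 1 < #|SCCS F| -> S \in SCCS F -> #|S| < #|AR F|.
Proof.
move=> h1 hS; rewrite ltn_neqAle subset_leq_card ?SCCS_sub // andbT.
apply/negP => /eqP hc.
have hSA : S = AR F by apply/eqP; rewrite eqEcard SCCS_sub // hc leqnn.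
have : SCCS F \subset [set S].
  apply/subsetP => S' hS'; rewrite inE; apply/eqP.
  case/SCCSP: (hS') => x hx hS'x.
  by apply: (@SCCS_disj F _ _ x) => //; rewrite ?hS'x ?mem_scc // hSA.
by move/subset_leq_card; rewrite cards1 => h; move: h1; rewrite ltnNge h.
Qed.

Lemma UP_sub F S E : UP_AF F S E \subset S.
Proof. exact: subsetDl. Qed.

Lemma AR_restrict F X : AR (restrict F X) = X :&: AR F.
Proof. by []. Qed.

Lemma card_restrict_lt F S E : 1 < #|SCCS F| -> S \in SCCS F ->
  #|AR (restrict F (UP_AF F S E))| < #|AR F|.
Proof.
move=> h1 hS; apply: leq_ltn_trans (SCCS_small h1 hS).
by apply: subset_leq_card; rewrite AR_restrict; apply: subset_trans (subsetIl _ _) (UP_sub _ _ _).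
Qed.

Lemma cf2_fuel_stable n m F E : #|AR F| <= n -> #|AR F| <= m ->
  cf2_fuel n F E = cf2_fuel m F E.
Proof.
elim: n m F E => [|n IH] m F E hn hm.
  have hS : #|SCCS F| <= 1 by apply: leq_trans (card_SCCS F) _; apply: leq_trans hn _.
  by case: m hm => [|m] _; rewrite /= hS.
case: m hm => [|m] hm.
  have hS : #|SCCS F| <= 1 by apply: leq_trans (card_SCCS F) _; apply: leq_trans hm _.
  by rewrite /= hS.
rewrite /=; case: ifP => // hS; congr (_ && _); apply: eq_forallb => S.
case hSi: (S \in SCCS F) => //=; apply: IH.
- by rewrite -ltnS; apply: leq_trans hn; apply: card_restrict_lt; rewrite // ltnNge hS.
- by rewrite -ltnS; apply: leq_trans hm; apply: card_restrict_lt; rewrite // ltnNge hS.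
Qed.

Lemma cf2_unfold F E : cf2_ext F E = (E \subset AR F) &&
  (if #|SCCS F| <= 1 then naive F E
   else [forall S in SCCS F, cf2_ext (restrict F (UP_AF F S E)) (E :&: S)]).
Proof.
rewrite /cf2_ext; case hk: #|AR F| => [|k].
  have hS : #|SCCS F| <= 1 by rewrite (leq_trans (card_SCCS F)) // hk.
  by rewrite /= hS.
rewrite /=; case: ifP => // hS; congr (_ && _); apply: eq_forallb => S.
case hSi: (S \in SCCS F) => //=; apply: cf2_fuel_stable => //.
by rewrite -ltnS -hk; apply: card_restrict_lt; rewrite // ltnNge hS.
Qed.


Lemma cf2_sub F E : cf2_ext F E -> E \subset AR F.
Proof. by rewrite cf2_unfold => /andP[]. Qed.

Lemma cfP F E : reflect (forall a b, a \in E -> b \in E -> ~~ attacks F a b) (conflict_free F E).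
Proof.
apply: (iffP forall_inP) => h.
- by move=> a b ha hb; move/forall_inP: (h a ha); apply.
- by move=> a ha; apply/forall_inP => b hb; apply: h.
Qed.

Lemma naiveP F E : reflect [/\ E \subset AR F, conflict_free F E &
   forall E', E' \subset AR F -> conflict_free F E' -> ~~ (E \proper E')] (naive F E).
Proof.
apply: (iffP and3P) => -[h1 h2 h3]; split => //.
- by move=> E' h4 h5; move/forallP: h3 => /(_ E'); rewrite h4 h5.
- by apply/forallP => E'; apply/negP => /and3P[h4 h5 h6]; move: (h3 E' h4 h5); rewrite h6.
Qed.

Lemma naive_empty F : AR F = set0 -> naive F set0.
Proof.
move=> h; apply/naiveP; split; rewrite ?sub0set //.
- by apply/cfP => a b; rewrite inE.
- by move=> E'; rewrite h subset0 => /eqP -> _; rewrite properxx.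
Qed.

Lemma naive_maxset F E : maxset (fun E => (E \subset AR F) && conflict_free F E) E -> naive F E.
Proof.
move/maxsetP => [/andP[h1 h2] h3]; apply/naiveP; split => // E' h4 h5.
apply/negP => hp; have := h3 E'; rewrite h4 h5 => /(_ isT (proper_sub hp)) hE.
by move: hp; rewrite hE properE subxx.
Qed.

Lemma S_out_AR F : S_out F (AR F) = set0.
Proof. by apply/setP => a; rewrite !inE; case: (a \in AR F). Qed.

Lemma UP_AR F E : UP_AF F (AR F) E = AR F.
Proof.
apply/setP => a; rewrite !inE S_out_AR setI0.
case: (a \in AR F); rewrite ?andbF //= andbT; apply/negP => /existsP[x]; by rewrite inE.
Qed.

Lemma restrict_AR F : eqAF (restrict F (AR F)) F.
Proof.
split; first by rewrite /= setIid.
move=> a b; rewrite attacks_restrict.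
by case h: (attacks F a b); rewrite ?andbF //; move: h => /and3P[-> -> _].
Qed.

Lemma SCCS_single F S : #|SCCS F| <= 1 -> S \in SCCS F -> S = AR F.
Proof.
move=> h1 hS; apply/eqP; rewrite eqEsubset SCCS_sub //=.
case/SCCSP: (hS) => x hx hSx.
apply/subsetP => y hy.
have hy' : scc F y \in SCCS F by apply: imset_f.
move/card_le1_eqP: h1 => /(_ _ _ hS hy') <-.
exact: mem_scc.
Qed.

Lemma cf2_char F E : cf2_ext F E = (E \subset AR F) &&
  [forall S in SCCS F, cf2_ext (restrict F (UP_AF F S E)) (E :&: S)].
Proof.
have hu := cf2_unfold F E.
rewrite {1}hu; case: ifP => hS //; case hE: (E \subset AR F) => //=.
apply/idP/forall_inP => [hn S hSi | h].
- rewrite (SCCS_single hS hSi) UP_AR (cf2_ext_eq _ (restrict_AR F)).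
  by rewrite (setIidPl hE) hu hS hE.
- case: (set_0Vmem (AR F)) => [h0 | [x hx]].
    by move: hE; rewrite h0 subset0 => /eqP ->; apply: naive_empty.
  have hSi : scc F x \in SCCS F by apply: imset_f.
  move: (h _ hSi); rewrite (SCCS_single hS hSi) UP_AR (cf2_ext_eq _ (restrict_AR F)).
  by rewrite (setIidPl hE) hu hS hE.
Qed.

Lemma cf2_naive_n n F E : #|AR F| <= n -> cf2_ext F E -> naive F E.
Proof.
elim: n F E => [|n IH] F E hn.
  have hS : #|SCCS F| <= 1 by apply: leq_trans (card_SCCS F) _; apply: leq_trans hn _.
  by rewrite cf2_unfold hS => /andP[].
rewrite cf2_unfold; case: ifP => [_ /andP[] //|hS /andP[hE /forall_inP hall]].
have hS' : 1 < #|SCCS F| by rewrite ltnNge hS.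
have hnv S : S \in SCCS F -> naive (restrict F (UP_AF F S E)) (E :&: S).
  move=> hSi; apply: IH (hall S hSi).
  by rewrite -ltnS; apply: leq_trans hn; apply: card_restrict_lt.
have hsub S : S \in SCCS F -> E :&: S \subset UP_AF F S E.
  move=> hSi; case/naiveP: (hnv S hSi) => h _ _.
  by apply: subset_trans h _; rewrite AR_restrict subsetIl.
have hcf : conflict_free F E.
  apply/cfP => a b ha hb; apply/negP => hab.
  have hbA : b \in AR F by move: hab => /and3P[].
  have hSi : scc F b \in SCCS F by apply: imset_f.
  have hbS : b \in E :&: scc F b by rewrite inE hb mem_scc.
  case haS: (a \in scc F b).
  - have haS' : a \in E :&: scc F b by rewrite inE ha haS.
    case/naiveP: (hnv _ hSi) => _ /cfP /(_ a b haS' hbS) + _.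
    by rewrite attacks_restrict (subsetP (hsub _ hSi) _ haS') (subsetP (hsub _ hSi) _ hbS) hab.
  - move/subsetP: (hsub _ hSi) => /(_ b hbS); rewrite !inE hbA /= /reach connect0 /=.
    rewrite andbT => /negP; apply; apply/existsP; exists a.
    rewrite in_setI ha /= /S_out in_set haS hab /=; move: (hab) => /and3P[-> _ _] /=.
    by rewrite andbT; apply/existsP; exists b; rewrite mem_scc // hab.
apply/naiveP; split => // E' hE' hcf'; apply/negP => /properP [hEE' [x hxE' hxE]].
have hxA : x \in AR F by apply: (subsetP hE').
have hSi : scc F x \in SCCS F by apply: imset_f.
case/naiveP: (hnv _ hSi) => _ _ /(_ (x |: (E :&: scc F x))).
have hxUP : x \in UP_AF F (scc F x) E.
  rewrite !inE hxA /reach connect0 /= /set_attacks andbT; apply/negP => /existsP [a].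
  rewrite !inE => /andP[/andP[ha _] hax].
  by move/cfP: hcf' => /(_ a x (subsetP hEE' a ha) hxE'); rewrite hax.
have -> : x |: (E :&: scc F x) \subset AR (restrict F (UP_AF F (scc F x) E)).
  rewrite AR_restrict subUset sub1set inE hxUP hxA /= subsetI hsub //=.
  by apply: subset_trans (subsetIl _ _) hE.
have -> : conflict_free (restrict F (UP_AF F (scc F x) E)) (x |: (E :&: scc F x)).
  apply/cfP => a b ha hb; rewrite attacks_restrict; apply/negP => /and3P[_ _ hab].
  have sub' : x |: (E :&: scc F x) \subset E'.
    by rewrite subUset sub1set hxE' (subset_trans (subsetIl _ _) hEE').
  by move/cfP: hcf' => /(_ a b (subsetP sub' a ha) (subsetP sub' b hb)); rewrite hab.
move=> /(_ isT isT); rewrite properE subsetUr /= negbK => /subsetP /(_ x (setU11 _ _)).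
by rewrite inE (negbTE hxE).
Qed.

Lemma cf2_naive F E : cf2_ext F E -> naive F E.
Proof. exact: cf2_naive_n. Qed.

Lemma cf2_cf F E : cf2_ext F E -> conflict_free F E.
Proof. by move/cf2_naive/naiveP => []. Qed.


Definition up_closed F U := forall a b, attacks F a b -> b \in U -> a \in U.

Lemma up_reach F U a b : up_closed F U -> reach F a b -> b \in U -> a \in U.
Proof.
move=> hU /connectP [p hp ->]; elim: p a hp => [|c p IH] a //= /andP[hac hp] hl.
exact: hU hac (IH c hp hl).
Qed.

Lemma up_closed_AR F : up_closed F (AR F).
Proof. by move=> a b /and3P[]. Qed.

Lemma S_out_sub F S U : up_closed F U -> S \subset U -> S_out F S \subset U.
Proof.
move=> hU hS; apply/subsetP => a; rewrite inE => /and3P[_ _ /existsP[b /andP[hb hab]]].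
exact: hU hab (subsetP hS b hb).
Qed.

Lemma UP_ext F S E1 E2 : E1 :&: S_out F S = E2 :&: S_out F S ->
  UP_AF F S E1 = UP_AF F S E2.
Proof. by move=> h; rewrite /UP_AF /D_AF h. Qed.

Lemma sink_exists F U : up_closed F U -> U \subset AR F -> U != set0 ->
  exists2 S, S \in SCCS F & [/\ S \subset U, S != set0 & up_closed F (U :\: S)].
Proof.
move=> hU hUA /set0Pn [x0 hx0].
pose desc x := [set y | reach F x y].
case: (@arg_minnP _ x0 (mem U) (fun x => #|desc x|) hx0) => x hx hmin.
have hxA : x \in AR F by apply: (subsetP hUA).
exists (scc F x); first by apply: imset_f.
split.
- apply/subsetP => y; rewrite in_scc => /and3P[_ _ hyx]; exact: up_reach hU hyx hx.
- by apply/set0Pn; exists x; apply: mem_scc.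
- move=> a b hab; rewrite !inE => /andP[hbS hbU].
  have haU : a \in U := hU a b hab hbU.
  rewrite haU andbT; apply/negP => haS; apply/negP: hbS; apply/negPn.
  move: haS; rewrite ?inE => /and3P[_ hxa hax].
  have hxb : reach F x b by apply: connect_trans hxa (connect1 hab).
  have hbA : b \in AR F by move: hab => /and3P[].
  rewrite hbA hxb /=.
  have hsub : desc b \subset desc x.
    by apply/subsetP => z; rewrite !inE => hbz; apply: connect_trans hxb hbz.
  have := hmin b hbU; rewrite -/(desc b) -/(desc x) => hle.
  have heq : desc b = desc x by apply/eqP; rewrite eqEcard hsub hle.
  have : x \in desc x by rewrite inE /reach connect0.
  by rewrite -heq inE.
Qed.

Definition partial_ok F U E0 := E0 \subset U /\
  forall S, S \in SCCS F -> S \subset U -> cf2_ext (restrict F (UP_AF F S E0)) (E0 :&: S).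

Lemma build F (Inv : {set T} -> {set T} -> Prop) :
  Inv set0 set0 ->
  (forall V S E0, up_closed F V -> S \in SCCS F -> (forall z, z \in S -> z \notin V) ->
     S_out F S \subset V -> E0 \subset V -> Inv V E0 ->
     exists C, cf2_ext (restrict F (UP_AF F S E0)) C /\ Inv (V :|: S) (E0 :|: C)) ->
  exists E, cf2_ext F E /\ Inv (AR F) E.
Proof.
move=> h0 hstep.
have inner n : forall U, up_closed F U -> U \subset AR F -> #|U| <= n ->
    exists E0, partial_ok F U E0 /\ Inv U E0.
  elim: n => [|n IH] U hU hUA hn;
    (case: (set_0Vmem U) => [-> | [u hu]];
     [ exists set0; split => //; split; first exact: sub0set;
       move=> S /SCCSP[x hx ->]; rewrite subset0 => /eqP h;
       by move: (mem_scc hx); rewrite h inE | ]).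
    by move: hn; rewrite leqn0 => /eqP/cards0_eq hU0; move: hu; rewrite hU0 inE.
  have hU0 : U != set0 by apply/set0Pn; exists u.
  case: (sink_exists hU hUA hU0) => S hSi [hSU hS0 hV].
  set V := U :\: S.
  have hVU : V \proper U.
    rewrite properE subsetDl /=; case/set0Pn: hS0 => s hs.
    by apply/subsetP => /(_ s (subsetP hSU s hs)); rewrite inE hs.
  have hVA : V \subset AR F by apply: subset_trans (subsetDl _ _) hUA.
  have [E0 [[hE0V hok] hInv]] : exists E0, partial_ok F V E0 /\ Inv V E0.
    by apply: IH => //; rewrite -ltnS; apply: leq_trans (proper_card hVU) hn.
  have hdisj : forall z, z \in S -> z \notin V by move=> z h1; rewrite inE h1.
  have hSout : S_out F S \subset V.
    apply/subsetP => a ha; rewrite inE (subsetP (S_out_sub hU hSU) a ha) andbT.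
    by move: ha; rewrite inE => /and3P[].
  case: (hstep V S E0 hV hSi hdisj hSout hE0V hInv) => C [hC hInvC].
  have hCS : C \subset S.
    by apply: subset_trans (cf2_sub hC) _; rewrite AR_restrict; apply: subset_trans (subsetIl _ _) (UP_sub _ _ _).
  have hVS : V :|: S = U.
    apply/setP => z; rewrite !inE; case hz: (z \in S) => /=; last by rewrite orbF.
    by rewrite (subsetP hSU z hz).
  exists (E0 :|: C); split; last by rewrite -hVS.
  split.
    by rewrite -hVS; apply: setUSS.
  move=> S' hS'i hS'U.
  case: (eqVneq S' S) => [-> | hne].
  - have -> : (E0 :|: C) :&: S = C.
      apply/setP => z; rewrite !inE; case hz: (z \in C); rewrite ?orbT /=.
        by rewrite (subsetP hCS z hz).
      rewrite orbF; apply/negP => /andP[hz0 hzS].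
      by move: (hdisj z hzS); rewrite (subsetP hE0V z hz0).
    rewrite (@UP_ext F S _ E0) //; apply/setP => z; rewrite !inE.
    case hz: (z \in C); rewrite ?orbT ?orbF //=.
    have hzS := subsetP hCS z hz.
    by rewrite hzS /= !andbF.
  - have hS'V : S' \subset V.
      apply/subsetP => z hz; rewrite inE (subsetP hS'U z hz) andbT.
      by apply/negP => hzS; rewrite (SCCS_disj hS'i hSi hz hzS) eqxx in hne.
    have hCV : forall z, z \in C -> z \notin V.
      move=> z hz; apply/negP => hzV.
      by move: (hdisj z (subsetP hCS z hz)); rewrite hzV.
    have -> : (E0 :|: C) :&: S' = E0 :&: S'.
      apply/setP => z; rewrite !inE; case hz: (z \in C); rewrite ?orbT ?orbF //=.
      by case hz': (z \in S'); rewrite ?andbF //; move: (hCV z hz); rewrite (subsetP hS'V z hz').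
    rewrite (@UP_ext F S' _ E0); first by apply: hok.
    apply/setP => z; rewrite !in_setI !in_setU; case hz: (z \in C); rewrite ?orbT ?orbF //=.
    case hz': (z \in S_out F S'); rewrite ?andbF ?andbT //.
    by move: (hCV z hz); rewrite (subsetP (S_out_sub hV hS'V) z hz').
have [E [[hE hok] hInv]] := inner #|AR F| (AR F) (@up_closed_AR F) (subxx _) (leqnn _).
exists E; split => //; rewrite cf2_char hE /=.
by apply/forall_inP => S hS; apply: hok => //; apply: SCCS_sub.
Qed.

Lemma naive_exists F : exists E, naive F E.
Proof.
have h0 : (set0 \subset AR F) && conflict_free F set0.
  by rewrite sub0set; apply/cfP => a b; rewrite inE.
have [E hmax _] := @maxset_exists _ (fun E => (E \subset AR F) && conflict_free F E) set0 h0.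
by exists E; apply: naive_maxset.
Qed.

Lemma cf2_exists F : exists E, cf2_ext F E.
Proof.
move: {2}#|AR F| (leqnn #|AR F|) => n; elim: n F => [|n IH] F hn;
  case hS: (#|SCCS F| <= 1);
  try (by have [E hE] := naive_exists F; exists E; rewrite cf2_unfold hS hE; case/naiveP: hE => ->).
  by move: hS; rewrite (leq_trans (card_SCCS F)) // (leq_trans hn).
have [E [hE _]] : exists E, cf2_ext F E /\ True.
  apply: (@build F (fun _ _ => True) I) => V S E0 _ hSi _ _ _ _.
  have [C hC] : exists C, cf2_ext (restrict F (UP_AF F S E0)) C.
    by apply: IH; rewrite -ltnS; apply: leq_trans hn; apply: card_restrict_lt; rewrite // ltnNge hS.
  by exists C.
by exists E.
Qed.


Lemma set_attacksP F E b : reflect (exists2 a, a \in E & attacks F a b) (set_attacks F E b).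
Proof.
apply: (iffP existsP) => [[a /andP[h1 h2]] | [a h1 h2]]; exists a => //; exact/andP.
Qed.

Lemma reach_mono F G a b : (forall u v, attacks F u v -> attacks G u v) ->
  reach F a b -> reach G a b.
Proof.
move=> h /connectP [p hp ->]; elim: p a hp => [|c p IH] a /=.
  by move=> _; rewrite /reach connect0.
move=> /andP[hac hp].
exact: connect_trans (connect1 (h _ _ hac)) (IH c hp).
Qed.

Lemma attacks_AR F a b : attacks F a b -> (a \in AR F) && (b \in AR F).
Proof. by case/and3P => -> ->. Qed.

Lemma restrict2_eq F Z1 Z2 W1 W2 :
  Z2 :&: (Z1 :&: AR F) = W2 :&: (W1 :&: AR F) ->
  eqAF (restrict (restrict F Z1) Z2) (restrict (restrict F W1) W2).
Proof.
move=> h; split => //= a b; rewrite !attacks_restrict.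
case hab: (attacks F a b); rewrite ?andbF //.
case/andP: (attacks_AR hab) => ha hb.
move/setP: (h) => /(_ a); rewrite !inE ha !andbT => hA.
move/setP: (h) => /(_ b); rewrite !inE hb !andbT => hB; move: hA hB.
by case: (a \in Z2); case: (a \in Z1); case: (b \in Z2); case: (b \in Z1);
   case: (a \in W2); case: (a \in W1); case: (b \in W2); case: (b \in W1).
Qed.

Lemma cf2_empty F : AR F = set0 -> cf2_ext F set0.
Proof.
move=> h; rewrite cf2_unfold sub0set /=.
have -> : #|SCCS F| <= 1.
  by rewrite (leq_trans (card_SCCS F)) // h cards0.
exact: naive_empty.
Qed.

Definition scc_closed F X := forall x y, x \in X -> x \in AR F -> y \in scc F x -> y \in X.

Lemma block_single F E X : #|SCCS F| <= 1 -> cf2_ext F E -> scc_closed F X ->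
  cf2_ext (restrict F (X :\: [set b | set_attacks F (E :\: X) b])) (E :&: X).
Proof.
move=> hS hcf2 hX; have hE := cf2_sub hcf2.
case: (set_0Vmem (X :&: AR F)) => [h0 | [x hx]].
  have -> : E :&: X = set0.
    apply/setP => z; rewrite !inE; apply/negP => /andP[hzE hzX].
    by move/setP: h0 => /(_ z); rewrite !inE hzX (subsetP hE z hzE).
  apply: cf2_empty; apply/setP => z; rewrite AR_restrict !inE.
  move/setP: h0 => /(_ z); rewrite !inE => h0.
  by case: (z \in X) h0; rewrite ?andbF //= => ->; rewrite andbF.
move: hx; rewrite inE => /andP[hxX hxA].
have hAX : AR F \subset X.
  apply/subsetP => y hy; apply: (hX x y hxX hxA).
  by rewrite (SCCS_single hS (imset_f _ hxA)).
have -> : E :&: X = E by apply/setIidPl; apply: subset_trans hE hAX.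
have hna : forall b, set_attacks F (E :\: X) b = false.
  move=> b; apply/negbTE/negP => /set_attacksP [c]; rewrite !inE => /andP[hcX hcE].
  by rewrite (subsetP hAX c (subsetP hE c hcE)) in hcX.
rewrite (cf2_ext_eq _ (_ : eqAF _ F)) //; split.
  apply/setP => z; rewrite AR_restrict !inE hna /=.
  by case hz: (z \in AR F); rewrite ?andbF //= (subsetP hAX z hz).
move=> a b; rewrite attacks_restrict; case hab: (attacks F a b); rewrite ?andbF //.
case/andP: (attacks_AR hab) => ha hb.
by rewrite !inE !hna (subsetP hAX a ha) (subsetP hAX b hb).
Qed.


Lemma in_UP F S E z : (z \in UP_AF F S E) = (z \in S) && ~~ set_attacks F (E :&: S_out F S) z.
Proof. by rewrite /UP_AF /D_AF in_setD in_set; case: (z \in S); case: (set_attacks _ _ _). Qed.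

Lemma in_S_out F S a : (a \in S_out F S) = [&& a \in AR F, a \notin S & [exists b in S, attacks F a b]].
Proof. by rewrite inE. Qed.

Lemma block n F E X : #|AR F| <= n -> cf2_ext F E -> scc_closed F X ->
  cf2_ext (restrict F (X :\: [set b | set_attacks F (E :\: X) b])) (E :&: X).
Proof.
elim: n F E X => [|n IH] F E X hn hcf2 hX;
  (case hS: (#|SCCS F| <= 1); first exact: block_single).
  by move: hS; rewrite (leq_trans (card_SCCS F)) // (leq_trans hn).
have hS1 : 1 < #|SCCS F| by rewrite ltnNge hS.
have hE := cf2_sub hcf2.
have /cfP hcf := cf2_cf hcf2.
move: (hcf2); rewrite cf2_char => /andP[_ /forall_inP hall].
set Y := X :\: [set b | set_attacks F (E :\: X) b].
set G := restrict F Y.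
have hYatt : forall z, z \in Y -> forall a, a \in E -> attacks F a z -> a \in X.
  move=> z; rewrite !inE => /andP[hz _] a ha haz; apply/negPn/negP => haX.
  by move/negP: hz; apply; apply/set_attacksP; exists a; rewrite // inE haX.
have hEY : E :&: X \subset AR G.
  apply/subsetP => z; rewrite inE => /andP[hzE hzX].
  rewrite AR_restrict !inE hzX (subsetP hE z hzE) andbT /= andbT.
  apply/negP => /set_attacksP [a]; rewrite inE => /andP[_ ha] haz.
  by move: (hcf a z ha hzE); rewrite haz.
have hattGF : forall u v, attacks G u v -> attacks F u v.
  by move=> u v; rewrite attacks_restrict => /and3P[].
rewrite cf2_char hEY /=; apply/forall_inP => C /SCCSP [t htG ->] {C}.
set C := scc G t.
have [htY htA] : t \in Y /\ t \in AR F by move: htG; rewrite AR_restrict inE => /andP[].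
set S := scc F t.
have hSi : S \in SCCS F by apply: imset_f.
have hCS : C \subset S.
  apply/subsetP => z; rewrite !in_scc => /and3P[hzG h1 h2].
  move: hzG; rewrite AR_restrict inE => /andP[_ ->] /=.
  by rewrite (reach_mono hattGF h1) (reach_mono hattGF h2).
have htX : t \in X by move: htY; rewrite inE => /andP[].
have hSX : S \subset X by apply/subsetP => z hz; apply: (hX t z htX htA hz).
set H := restrict F (UP_AF F S E).
have hH := hall S hSi.
have hARH : AR H \subset AR G.
  apply/subsetP => z; rewrite !AR_restrict in_setI in_UP => /andP[/andP[hzS hzn] hzA].
  rewrite in_setI hzA andbT /Y in_setD in_set (subsetP hSX z hzS) andbT.
  apply/negP => /set_attacksP [a].
  rewrite inE => /andP[haX haE] haz; move/negP: hzn; apply; apply/set_attacksP.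
  exists a => //; rewrite inE haE in_S_out.
  case/andP: (attacks_AR haz) => -> _ /=.
  rewrite (_ : (a \in S) = false); last by apply/negP => haS; move: haX; rewrite (subsetP hSX a haS).
  by apply/existsP; exists z; rewrite hzS.
have hattHG : forall u v, attacks H u v -> attacks G u v.
  move=> u v huv; case/andP: (attacks_AR huv) => /(subsetP hARH) hu /(subsetP hARH) hv.
  move: hu hv; rewrite !AR_restrict attacks_restrict !in_setI => /andP[-> _] /andP[-> _] /=.
  by move: huv; rewrite attacks_restrict => /and3P[].
have hXT : scc_closed H C.
  move=> x y hxC hxH; rewrite in_scc => /and3P[hyH h1 h2].
  rewrite /C -(scc_eq hxC) in_scc (subsetP hARH y hyH).
  by rewrite (reach_mono hattHG h1) (reach_mono hattHG h2).
have hres := IH H (E :&: S) C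
  (leq_trans (card_restrict_lt E hS1 hSi) hn) hH hXT.
have -> : E :&: X :&: C = E :&: S :&: C.
  apply/setP => z; rewrite !in_setI; case hz: (z \in C); rewrite ?andbF //=.
  by rewrite (subsetP hSX z (subsetP hCS z hz)) (subsetP hCS z hz).
have hCG : C \subset AR G by apply: scc_sub.
have heq : UP_AF G C (E :&: X) :&: (Y :&: AR F) =
    (C :\: [set b | set_attacks H (E :&: S :\: C) b]) :&: (UP_AF F S E :&: AR F).
  apply/setP => z; case hzC: (z \in C); last first.
    by rewrite !in_setI in_UP in_setD hzC /= !andbF.
  have := subsetP hCG z hzC; rewrite AR_restrict in_setI => /andP[hzY hzA].
  have hzS := subsetP hCS z hzC.
  have hL : set_attacks G (E :&: X :&: S_out G C) z = set_attacks F (E :\: C) z.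
    apply/idP/idP => /set_attacksP [a ha haz]; apply/set_attacksP; exists a.
    - move: ha; rewrite !in_setI in_S_out => /andP[/andP[haE _] /and3P[_ haC _]].
      by rewrite in_setD haC haE.
    - exact: hattGF.
    - move: ha; rewrite in_setD => /andP[haC haE].
      have haX := hYatt z hzY a haE haz.
      have haG : a \in AR G by apply: (subsetP hEY); rewrite in_setI haE haX.
      rewrite !in_setI haE haX in_S_out haG haC /=.
      apply/existsP; exists z; rewrite hzC /= attacks_restrict haz andbT.
      by move: haG; rewrite AR_restrict in_setI hzY => /andP[-> _].
    - move: ha; rewrite in_setD => /andP[haC haE].
      have haX := hYatt z hzY a haE haz.
      have haG : a \in AR G by apply: (subsetP hEY); rewrite in_setI haE haX.
      rewrite attacks_restrict haz hzY andbT.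
      by move: haG; rewrite AR_restrict in_setI => /andP[-> _].
  have hR : set_attacks H (E :&: S :\: C) z || set_attacks F (E :&: S_out F S) z
      = set_attacks F (E :\: C) z.
    apply/idP/idP.
    - case/orP => /set_attacksP [a ha haz]; apply/set_attacksP; exists a.
      + by move: ha; rewrite in_setD in_setI in_setD => /and3P[-> -> _].
      + by move: haz; rewrite attacks_restrict => /and3P[].
      + move: ha; rewrite in_setI in_S_out => /andP[haE /and3P[_ haS _]].
        rewrite in_setD haE andbT; apply/negP => haC.
        by move: haS; rewrite (subsetP hCS a haC).
      + done.
    - move=> /set_attacksP [a ha haz]; move: ha; rewrite in_setD => /andP[haC haE].
      case hsF: (set_attacks F (E :&: S_out F S) z); first by rewrite orbT.
      rewrite orbF; case haS: (a \in S).
      + apply/set_attacksP; exists a; first by rewrite in_setD in_setI haC haE haS.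
        rewrite attacks_restrict haz andbT !in_UP haS hzS hsF /= andbT.
        apply/negP => /set_attacksP [b hb hba].
        by move: hb; rewrite in_setI => /andP[hbE _]; move: (hcf b a hbE haE); rewrite hba.
      + exfalso; move/negbT/negP: hsF; apply; apply/set_attacksP; exists a => //.
        rewrite in_setI haE in_S_out haS /=; case/andP: (attacks_AR haz) => -> _ /=.
        by apply/existsP; exists z; rewrite hzS haz.
  rewrite !in_setI in_UP in_setD in_set hzC hzY hzA in_UP hzS /= !andbT hL -hR.
  by case: (set_attacks H _ z); case: (set_attacks F (E :&: S_out F S) z).
by rewrite (cf2_ext_eq _ (restrict2_eq heq)).
Qed.


Lemma main_single F F' E : #|SCCS F'| <= 1 -> normal_expansion F F' -> cf2_ext F E ->
  exists E', cf2_ext F' E' /\ (~ (E' \subset AR F) \/ E' = E).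
Proof.
move=> hS [hsub hfw hbw] hE.
have hEA := cf2_sub hE.
have /naiveP [_ /cfP hcf hmax] := cf2_naive hE.
have hEA' : E \subset AR F' := subset_trans hEA hsub.
case hnF': (naive F' E).
  by exists E; split; [rewrite cf2_unfold hS hnF' hEA' | right].
have hcfF' : conflict_free F' E.
  apply/cfP => a b ha hb; apply/negP => hab.
  have := hbw a b (subsetP hEA a ha) (subsetP hEA b hb) hab.
  by move: (hcf a b ha hb) => /negbTE ->.
move/negbT: hnF'; rewrite /naive hEA' hcfF' /= negb_forall => /existsP [E2].
rewrite negbK => /and3P [h1 h2 h3].
have hE2 : ~ (E2 \subset AR F).
  move=> hE2A; have hcfE2 : conflict_free F E2.
    apply/cfP => a b ha hb; apply/negP => hab.
    by move/cfP: h2 => /(_ a b ha hb); rewrite (hfw a b hab).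
  by move: (hmax E2 hE2A hcfE2); rewrite h3.
have h0 : (E2 \subset AR F') && conflict_free F' E2 by rewrite h1 h2.
have [E3 hmax3 hE23] := @maxset_exists _ (fun E => (E \subset AR F') && conflict_free F' E) E2 h0.
have hn3 := naive_maxset hmax3.
exists E3; split.
  by rewrite cf2_unfold hS hn3; case/naiveP: hn3 => ->.
by left => h; apply: hE2; apply: subset_trans hE23 h.
Qed.

Lemma main n F F' E : #|AR F'| <= n -> normal_expansion F F' -> cf2_ext F E ->
  exists E', cf2_ext F' E' /\ (~ (E' \subset AR F) \/ E' = E).
Proof.
elim: n F F' E => [|n IH] F F' E hn hN hE;
  (case hS: (#|SCCS F'| <= 1); first exact: main_single).
  by move: hS; rewrite (leq_trans (card_SCCS F')) // (leq_trans hn).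
have hS1 : 1 < #|SCCS F'| by rewrite ltnNge hS.
case: (hN) => hsub hfw hbw.
have hEA := cf2_sub hE.
have /cfP hcf := cf2_cf hE.
have [E' [hE' hInv]] : exists E', cf2_ext F' E' /\
    (fun V E0 => ~ (E0 \subset AR F) \/ E0 = E :&: V) (AR F') E'.
  apply: (@build F' (fun V E0 => ~ (E0 \subset AR F) \/ E0 = E :&: V)); first by right; rewrite setI0.
  move=> V S E0 hV hSi hdisj hSout hE0V [hnot | ->].
    have [C hC] := cf2_exists (restrict F' (UP_AF F' S E0)).
    exists C; split => //; left => h; apply: hnot; apply: subset_trans h.
    exact: subsetUl.
  set Y := S :\: [set b | set_attacks F (E :\: S) b].
  have hclosed : scc_closed F S.
    case/SCCSP: (hSi) => s hs hSs.
    move=> x y hxS hxA; rewrite in_scc => /and3P[hyA h1 h2].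
    rewrite hSs -(scc_eq (_ : x \in scc F' s)) -?hSs // in_scc (subsetP hsub y hyA).
    by rewrite (reach_mono hfw h1) (reach_mono hfw h2).
  have hblk := block (leqnn _) hE hclosed.
  set UP' := UP_AF F' S (E :&: V).
  have hYeq : Y :&: AR F = UP' :&: AR F.
    apply/setP => z; rewrite !in_setI; case hzA: (z \in AR F); rewrite ?andbF // !andbT.
    rewrite /Y /UP' in_setD in_set in_UP; case hzS: (z \in S); rewrite ?andbF // !andbT.
    congr negb; apply/idP/idP => /set_attacksP [a ha haz]; apply/set_attacksP; exists a.
    - move: ha; rewrite in_setD => /andP[haS haE].
      have haz' := hfw a z haz.
      have haO : a \in S_out F' S.
        rewrite in_S_out haS; case/andP: (attacks_AR haz') => -> _ /=.
        by apply/existsP; exists z; rewrite hzS haz'.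
      by rewrite !in_setI haE haO (subsetP hSout a haO).
    - exact: hfw.
    - move: ha; rewrite !in_setI in_S_out => /andP[/andP[haE _] /and3P[_ haS _]].
      by rewrite in_setD haS haE.
    - by apply: hbw => //; move: ha; rewrite !in_setI => /andP[/andP[haE _] _]; apply: (subsetP hEA).
  have hnexp : normal_expansion (restrict F Y) (restrict F' UP').
    split.
    - rewrite !AR_restrict hYeq; apply/subsetP => z; rewrite !in_setI => /andP[-> hz].
      by rewrite (subsetP hsub z hz).
    - move=> a b; rewrite !attacks_restrict => /and3P[haY hbY hab].
      case/andP: (attacks_AR hab) => ha hb.
      have : a \in Y :&: AR F by rewrite in_setI haY ha.
      have : b \in Y :&: AR F by rewrite in_setI hbY hb.
      rewrite hYeq !in_setI => /andP[-> _] /andP[-> _].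
      by rewrite hfw.
    - move=> a b; rewrite !AR_restrict !in_setI => /andP[haY ha] /andP[hbY hb].
      rewrite !attacks_restrict haY hbY /= => /and3P[_ _ hab].
      exact: hbw.
  have hcard : #|AR (restrict F' UP')| <= n.
    by rewrite -ltnS; apply: leq_trans hn; apply: card_restrict_lt.
  have [C [hC [hCn | hCeq]]] := IH _ _ _ hcard hnexp hblk.
    exists C; split => //; left => h.
    apply: hCn; rewrite AR_restrict hYeq; apply/subsetP => z hz.
    rewrite in_setI (subsetP h z (subsetP (subsetUr _ _) z hz)) andbT.
    by move: (subsetP (cf2_sub hC) z hz); rewrite AR_restrict in_setI => /andP[].
  exists C; split => //; right; rewrite hCeq.
  by rewrite setIUr.
exists E'; split => //; case: hInv => [h | ->]; [by left | right].
by apply/setIidPl; apply: subset_trans hEA hsub.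
Qed.

End S.

Theorem proposition40 (T : finType) (F F' : AF T) :
  normal_expansion F F' ->
  forall E : {set T}, cf2_ext F E ->
  exists E' : {set T}, cf2_ext F' E' /\ (~ (E' \subset AR F) \/ E' = E).
Proof. move=> hN E hE; exact: (main (leqnn _) hN hE). Qed.
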